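(* Let $\Gamma$ be a connected signed graph on $N$ vertices with signed Laplacian $\mathcal{L}$, and let $P$ be the orthogonal projection of $\mathbb{R}^N$ onto $S_{\rm fixed}$. Then the operator $P\mathcal{L}$, considered as an operator from $S_{\rm fixed}$ to $S_{\rm fixed}$, has exactly $c(\Gamma_-)-1$ negative eigenvalues, exactly one zero eigenvalue and exactly $c(\Gamma_+)-1$ positive eigenvalues, independently of the choice of edge weights (with the given signs). In particular $S_{\rm fixed}$ is a maximal subspace of fixed index, i.e. a subspace of fixed index of dimension $c(\Gamma_+)+c(\Gamma_-)-1$.
   Context: A signed graph $\Gamma$ is a finite simple undirected graph with vertex set $\{1,\dots,N\}$ in which every edge $\{i,j\}$ carries a nonzero real weight $\gamma_{ij}$, which may be of either sign ($\gamma_{ij}=0$ for non-edges). The signed Laplacian has $\mathcal{L}_{ij}=\gamma_{ij}$ for $i\ne j$ and $\mathcal{L}_{ii}=-\sum_{k\ne i}\gamma_{ik}$. $\Gamma_+$ (resp. $\Gamma_-$) is the spanning subgraph on all vertices containing exactly the positively (resp. negatively) weighted edges; $c(H)$ is the number of connected components of $H$. $S_{\rm fixed}$ is the span of the characteristic vectors (entries $1$ on the component's vertices, $0$ elsewhere) of all components of $\Gamma_+$ and all components of $\Gamma_-$. A subspace $S$ (chosen independently of the weights) is a subspace of fixed index if the operator $P_S\mathcal{L}:S\to S$ ($P_S$ the orthogonal projection onto $S$) has the same numbers of negative, zero and positive eigenvalues for every choice of weights with the given signs. *)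

(* Defs.v *)
From Stdlib Require Import Reals.
From HB Require Import structures.
From mathcomp Require Import all_boot all_order all_algebra.
From mathcomp Require Import Rstruct.

Set Implicit Arguments.
Unset Strict Implicit.
Unset Printing Implicit Defensive.

Import Order.TTheory GRing.Theory Num.Theory.
Local Open Scope ring_scope.

(* A signed graph on vertices 'I_N is given by its weight matrix gamma:
   gamma i j = 0 for non-edges, nonzero (of either sign) on edges;
   simple undirected: symmetric with zero diagonal. *)
Definition is_signed_graph (N : nat) (gamma : 'M[R]_N) : Prop :=
  gamma^T = gamma /\ (forall i, gamma i i = 0).

Definition edge_rel (N : nat) (gamma : 'M[R]_N) : rel 'I_N :=
  fun i j => gamma i j != 0.
Definition pos_rel (N : nat) (gamma : 'M[R]_N) : rel 'I_N :=
  fun i j => 0 < gamma i j.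
Definition neg_rel (N : nat) (gamma : 'M[R]_N) : rel 'I_N :=
  fun i j => gamma i j < 0.

Definition sg_connected (N : nat) (gamma : 'M[R]_N) : Prop :=
  forall i j, connect (edge_rel gamma) i j.

(* c(H): number of connected components of the spanning subgraph H
   (on all N vertices) with adjacency relation e *)
Definition ncomp (N : nat) (e : rel 'I_N) : nat := n_comp e 'I_N.

Definition signed_laplacian (N : nat) (gamma : 'M[R]_N) : 'M[R]_N :=
  \matrix_(i, j) (if i == j then - \sum_(k | k != i) gamma i k
                  else gamma i j).

Definition comp_vec (N : nat) (e : rel 'I_N) (i : 'I_N) : 'rV[R]_N :=
  \row_j (connect e i j)%:R.

(* A matrix whose row space is S_fixed: its rows are the characteristic
   vectors of the components of Gamma_+ (first block) and of Gamma_-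
   (second block); every component occurs (possibly several times). *)
Definition Sfixed_mx (N : nat) (gamma : 'M[R]_N) : 'M[R]_(N + N, N) :=
  col_mx (\matrix_(i < N) comp_vec (pos_rel gamma) i)
         (\matrix_(i < N) comp_vec (neg_rel gamma) i).

Definition orth_proj (m N : nat) (S : 'M[R]_(m, N)) : 'M[R]_N :=
  let B := row_base S in B^T *m invmx (B *m B^T) *m B.

(* Matrix, in the basis row_base S of the subspace S, of the operator
   P_S A : S -> S, v |-> P_S (A v).  In row-vector convention the map
   v |-> P_S A v reads x |-> x *m (P_S *m A)^T. *)
Definition restr_op (m N : nat) (S : 'M[R]_(m, N)) (A : 'M[R]_N)
  : 'M[R]_(\rank S) :=
  let B := row_base S in B *m (orth_proj S *m A)^T *m pinvmx B.

(* P_S A : S -> S has exactly nneg negative, nzero zero and npos positive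
   eigenvalues (counted with multiplicity), i.e. its characteristic
   polynomial splits over R with this multiset of roots. *)
Definition has_inertia (m N : nat) (S : 'M[R]_(m, N)) (A : 'M[R]_N)
  (nneg nzero npos : nat) : Prop :=
  exists s : seq R,
    char_poly (restr_op S A) = \prod_(x <- s) ('X - x%:P) /\
    count (fun x => x < 0) s = nneg /\
    count (fun x => x == 0) s = nzero /\
    count (fun x => 0 < x) s = npos.

Definition same_signs (N : nat) (gamma gamma' : 'M[R]_N) : Prop :=
  forall i j, Num.sg (gamma i j) = Num.sg (gamma' i j).

Definition fixed_index (m N : nat) (S : 'M[R]_(m, N)) (gamma : 'M[R]_N)
  : Prop :=
  exists nneg nzero npos : nat,
    forall gamma' : 'M[R]_N, is_signed_graph gamma' -> same_signs gamma gamma' ->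
      has_inertia S (signed_laplacian gamma') nneg nzero npos.

(* Main.v *)
Require Import Defs.
From Stdlib Require Import Reals.
From HB Require Import structures.
From mathcomp Require Import all_boot all_order all_algebra.
From mathcomp Require Import Rstruct.
Import Order.TTheory GRing.Theory Num.Theory.
Local Open Scope ring_scope.

From Stdlib Require Import FunctionalExtensionality.
From mathcomp Require Import complex zify ring.

Module Helpers.
Set Implicit Arguments.
Unset Strict Implicit.
Unset Printing Implicit Defensive.
Import Order.TTheory GRing.Theory Num.Theory Num.Def.
Local Open Scope ring_scope.
Local Open Scope sesquilinear_scope.

Lemma char_poly_simil (F : fieldType) n (T A : 'M[F]_n) :
  T \in unitmx -> char_poly (T *m A *m invmx T) = char_poly A.
Proof.
move=> Tu; rewrite /char_poly /char_poly_mx.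
have -> : 'X%:M - map_mx polyC (T *m A *m invmx T) =
   map_mx polyC T *m ('X%:M - map_mx polyC A) *m map_mx polyC (invmx T).
  rewrite mulmxBr mulmxBl !map_mxM; congr (_ - _).
  rewrite mul_mx_scalar -scalemxAl -map_mxM mulmxV // map_mx1.
  by rewrite -mul_mx_scalar mul1mx.
rewrite !det_mulmx !det_map_mx mulrC mulrA -rmorphM.
have -> : \det (invmx T) * \det T = 1 by rewrite -det_mulmx mulVmx // det1.

by rewrite rmorph1 mul1r.
Qed.
Notation C := (complex R).
Notation toC := (real_complex R).

Lemma conj_toC (x : R) : conjC (toC x) = toC x.
Proof. apply: conj_Creal. by apply/complex_realP; exists x. Qed.

Lemma map_tr_conj m n (A : 'M[R]_(m, n)) : (map_mx toC A)^t* = map_mx toC A^T.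
Proof. by apply/matrixP => i j; rewrite !mxE conj_toC. Qed.

Lemma restr_opE N m (S : 'M[R]_(m, N)) (L : 'M[R]_N) : L^T = L ->
  restr_op S L = row_base S *m L *m (row_base S)^T *m invmx (row_base S *m (row_base S)^T).
Proof.
move=> sL; rewrite /restr_op /orth_proj.
have fB : row_free (row_base S) by exact: row_base_free.
move: (row_base S) fB => B fB.
have hP := mulmxVp fB; move: (pinvmx B) hP => P hP.
rewrite !trmx_mul trmxK trmx_inv trmx_mul trmxK sL !mulmxA.
by rewrite -[_ *m B *m P]mulmxA hP mulmx1.
Qed.

Definition cform N (Lc : 'M[C]_N) (z : 'rV[C]_N) : C := (z *m Lc *m z^t*) 0 0.

Lemma trmxC_mul m n p (A : 'M[C]_(m, n)) (B : 'M[C]_(n, p)) :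
  (A *m B)^t* = B^t* *m A^t*.
Proof. by rewrite trmx_mul map_mxM. Qed.

Lemma diag_form n (w : 'rV[C]_n) (d : 'rV[C]_n) :
  (w *m diag_mx d *m w^t*) 0 0 = \sum_i d 0 i * (w 0 i * conjC (w 0 i)).
Proof.
rewrite mul_mx_diag mxE; apply: eq_bigr => i _; rewrite !mxE.
by rewrite mulrCA mulrA.
Qed.

Section Core.
Variables (N m : nat) (S : 'M[R]_(m, N)) (L : 'M[R]_N).
Hypothesis sL : L^T = L.

Let r := \rank S.
Let B := row_base S.
Let Bc := map_mx toC B.
Let Q := schmidt Bc.
Let T := Bc *m Q^t*.
Let Lc := map_mx toC L.
Let H := Q *m Lc *m Q^t*.

Let fBc : row_free Bc.
Proof. by rewrite /row_free mxrank_map; exact: row_base_free. Qed.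
Let Qu : Q \is unitarymx.
Proof. exact/schmidt_unitarymx/rank_leq_col. Qed.
Let QQ : Q *m Q^t* = 1%:M.
Proof. exact/unitarymxP. Qed.
Let eqQ : (Q :=: Bc)%MS.
Proof. exact: eqmx_schmidt_free. Qed.
Let fQ : row_free Q.
Proof. by rewrite /row_free mxrank_unitary. Qed.
Let BcTQ : Bc = T *m Q.
Proof.
have : (Bc <= Q)%MS by rewrite eqQ.
by case/submxP=> X hX; rewrite /T hX -(mulmxA X) QQ mulmx1.
Qed.
Let Tu : T \in unitmx.
Proof.
have : (Q <= Bc)%MS by rewrite eqQ.
case/submxP=> Y hY.
have : (Y *m T) *m Q = 1%:M *m Q by rewrite mul1mx -mulmxA -BcTQ.
by move/(row_free_inj fQ) => /mulmx1_unit [].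
Qed.
Let Tcu : T^t* \in unitmx.
Proof. by rewrite map_unitmx unitmx_tr. Qed.

Let Hherm : H \is hermsymmx.
Proof.
apply/is_hermitianmxP; rewrite expr0 scale1r /H !trmxC_mul trmxCK mulmxA.
by rewrite /Lc map_tr_conj sL.
Qed.

Let U := spectralmx H.
Let d := spectral_diag H.
Let Uu : U \is unitarymx.
Proof. exact: spectral_unitarymx. Qed.

Lemma Mc_eq : map_mx toC (restr_op S L) = T *m H *m invmx T.
Proof.
have -> : map_mx toC (restr_op S L) = Bc *m Lc *m Bc^t* *m invmx (Bc *m Bc^t*).
  rewrite restr_opE // /Bc /B /Lc; move: (row_base S) => B0.
  by rewrite !map_mxM map_invmx map_mxM -!map_tr_conj.
rewrite /H; move: Tu Tcu BcTQ QQ; move: (T) (Q) (Bc) => T0 Q0 Bc0 Tu0 Tcu0 -> QQ0.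
rewrite !trmxC_mul !mulmxA -[T0 *m Q0 *m Q0^t*]mulmxA QQ0 mulmx1.
have Xu : T0 *m T0^t* \in unitmx by rewrite unitmx_mul Tu0.
have key : forall Y : 'M_(\rank S), Y *m T0^t* *m invmx (T0 *m T0^t*) = Y *m invmx T0.
  move=> Y; rewrite -{1}[T0^t*](mulKmx Tu0) (mulmxA Y (invmx T0)) mulmxK //.
by rewrite key.
Qed.

Let UU : U *m U^t* = 1%:M.
Proof. exact/unitarymxP. Qed.
Let HU : H = U^t* *m diag_mx d *m U.
Proof.
rewrite -invmx_unitary //; apply/orthomx_spectralP.
exact: hermitian_normalmx.
Qed.
Let dreal i : d 0 i \is Num.real.
Proof. exact: (mxOverP (hermitian_spectral_diag_real Hherm)). Qed.

Definition sq := [seq complex.Re (d 0 i) | i <- enum 'I_r].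

Lemma char_sq : char_poly (restr_op S L) = \prod_(x <- sq) ('X - x%:P).
Proof.
apply: (map_poly_inj toC); rewrite map_char_poly Mc_eq char_poly_simil //.
rewrite HU -invmx_unitary //.
have -> : invmx U *m diag_mx d *m U = invmx U *m diag_mx d *m invmx (invmx U).
  by rewrite invmxK.
rewrite char_poly_simil ?unitmx_inv ?unitarymx_unit //.
rewrite char_poly_trig ?diag_mx_is_trig // rmorph_prod big_map big_enum /=.
apply: eq_bigr => i _; rewrite map_polyXsubC mxE eqxx mulr1n.
by congr (_ - _%:P); symmetry; apply: (RRe_real (dreal i)).
Qed.

Lemma count_main (e : R) k (W : 'M[C]_(k, N)) k0 (K0 : 'M[C]_(k0, N)) :
  (W <= map_mx toC S)%MS ->
  (forall z : 'rV[C]_N, (z <= W)%MS -> toC e * cform Lc z <= 0 -> (z <= K0)%MS) ->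
  (\rank W <= count (fun x : R => (0 < e * x)%R) sq + \rank K0)%N.
Proof.
move=> sW hW.
pose P := [pred i : 'I_r | e * complex.Re (d 0 i) <= 0].
pose Ps : 'M[C]_(#|P|, r) := \matrix_(j, i) ((enum_val j == i)%:R).
have PsPs : Ps *m Ps^T = 1%:M.
  apply/matrixP => j j'; rewrite !mxE (bigD1 (enum_val j)) //= !mxE eqxx mul1r.
  rewrite big1 ?addr0; last by move=> i; rewrite !mxE eq_sym => /negbTE ->; rewrite mul0r.
  by rewrite (inj_eq enum_val_inj) eq_sym.
have rPs : \rank Ps = #|P|.
  apply/eqP; rewrite eqn_leq rank_leq_row /=.
  by have := mxrankM_maxl Ps Ps^T; rewrite PsPs mxrank1.
pose V := Ps *m U *m Q.
have rV : \rank V = #|P|.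
  by rewrite /V mxrankMfree // mxrankMfree // row_free_unit unitarymx_unit.
have sV : (V <= map_mx toC S)%MS.
  by apply: mulmx_sub; rewrite eqQ /Bc map_submx /B eq_row_base.
have UHU : U *m H *m U^t* = diag_mx d.
  by rewrite HU !mulmxA UU mul1mx -mulmxA UU mulmx1.
have formV : forall z, (z <= V)%MS -> toC e * cform Lc z <= 0.
  move=> z /submxP [c ->]; set w := c *m Ps.
  have -> : cform Lc (c *m V) = (w *m diag_mx d *m w^t*) 0 0.
    by rewrite -UHU /cform /H /V /w !trmxC_mul !mulmxA.
  rewrite diag_form mulr_sumr; apply: sumr_le0 => i _.
  case: (boolP (P i)) => Pi.
    rewrite mulrA; apply: mulr_le0_ge0; last first.
      exact: mul_conjC_ge0.
    rewrite -(RRe_real (dreal i)) -rmorphM.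
    have h : toC (e * complex.Re (d 0 i)) <= toC 0 by rewrite lecR.
    by rewrite rmorph0 in h.
  rewrite /w !mxE big1 ?mul0r ?mulr0 //; move=> j _; rewrite !mxE.
  have /negbTE-> : enum_val j != i.
    apply/eqP => hj; have := enum_valP j; rewrite hj => Pi'.
    by move: Pi; rewrite -[P i]/(i \in P) Pi'.
  by rewrite mulr0.
have capK : (V :&: W <= K0)%MS.
  apply/row_subP => i; apply: hW.
    exact: submx_trans (row_sub i _) (capmxSr _ _).
  apply: formV; exact: submx_trans (row_sub i _) (capmxSl _ _).
have h1 := mxrank_sum_cap V W.
have h2 : (\rank (V + W)%MS <= \rank (map_mx toC S))%N.
  by apply: mxrankS; rewrite addsmx_sub sV sW.
rewrite mxrank_map -/r rV in h1 h2.
have h3 := mxrankS capK.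
have cnt : count (fun x => 0 < e * x) sq = #|[predC P]|.
  rewrite cardE /enum_mem size_filter /sq count_map -enumT.
  by apply: eq_count => i /=; rewrite inE ltNge.
have h4 := cardC P; rewrite card_ord in h4.
rewrite cnt -(leq_add2l #|P|) -h1 addnA h4; exact: leq_add h2 h3.
Qed.
End Core.

Lemma core_inertia N m (S : 'M[R]_(m, N)) (L : 'M[R]_N) : L^T = L ->
  exists s : seq R,
    char_poly (restr_op S L) = \prod_(x <- s) ('X - x%:P) /\
    size s = \rank S /\
    forall (e : R) k (W : 'M[C]_(k, N)) k0 (K0 : 'M[C]_(k0, N)),
      (W <= map_mx toC S)%MS ->
      (forall z : 'rV[C]_N, (z <= W)%MS ->
          toC e * cform (map_mx toC L) z <= 0 -> (z <= K0)%MS) ->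
      (\rank W <= count (fun x : R => (0 < e * x)%R) s + \rank K0)%N.
Proof.
move=> sL; exists (sq S L); split; first exact: char_sq.
split; first by rewrite size_map size_enum_ord.
by move=> e k W k0 K0; apply: count_main.
Qed.

Definition compmx (F : nzRingType) N (e : rel 'I_N) : 'M[F]_N :=
  \matrix_(i, j) (connect e i j)%:R.

Lemma map_compmx (F G : nzRingType) (f : {rmorphism F -> G}) N (e : rel 'I_N) :
  map_mx f (compmx F e) = compmx G e.
Proof. by apply/matrixP => i j; rewrite !mxE rmorph_nat. Qed.

Lemma comp_const (F : fieldType) N (e : rel 'I_N) : connect_sym e ->
  forall z : 'rV[F]_N, (z <= compmx F e)%MS ->
  forall i j, connect e i j -> z 0 i = z 0 j.
Proof.
move=> se z /submxP [c ->] i j cij; rewrite !mxE; apply: eq_bigr => k _.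
by rewrite !mxE (same_connect_r se cij).
Qed.

Lemma ones_sub (F : fieldType) N (e : rel 'I_N) : connect_sym e ->
  ((const_mx 1 : 'rV[F]_N) <= compmx F e)%MS.
Proof.
move=> se.
have -> : (const_mx 1 : 'rV[F]_N) = (\row_k ((roots e k)%:R : F)) *m compmx F e.
  apply/rowP => j; rewrite !mxE (bigD1 (fingraph.root e j)) //= !mxE roots_root.
  rewrite se connect_root mul1r big1 ?addr0 //.
  move=> k kj; rewrite !mxE; case: (boolP (roots e k)) => rk; last by rewrite mul0r.
  case: (boolP (connect e k j)) => ckj; last by rewrite mulr0.
  have := (fingraph.rootP se ckj); rewrite (eqP rk) => hk.
  by rewrite hk eqxx in kj.
  exact: se.
exact: submxMl.
Qed.

Lemma rank_compmx (F : fieldType) N (e : rel 'I_N) : connect_sym e ->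
  \rank (compmx F e) = n_comp e 'I_N.
Proof.
move=> se; set A := compmx F e.
pose Ar := rowsub (@enum_val _ (roots e)) A.
pose E : 'M[F]_(N, #|roots e|) := \matrix_(j, k) ((j == enum_val k)%:R).
have rootsE : forall a b, roots e a -> roots e b -> connect e a b = (a == b).
  move=> a b ra rb; rewrite -(root_connect se) (eqP ra) (eqP rb) //.
have ArE : Ar *m E = 1%:M.
  apply/matrixP => k k'; rewrite !mxE (bigD1 (enum_val k')) //= !mxE eqxx mulr1.
  rewrite big1 ?addr0; last by move=> j /negbTE hj; rewrite !mxE hj mulr0.
  by rewrite (rootsE _ _ (enum_valP k) (enum_valP k')) (inj_eq enum_val_inj).
have rAr : \rank Ar = #|roots e|.
  apply/eqP; rewrite eqn_leq rank_leq_row /=.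
  by have := mxrankM_maxl Ar E; rewrite ArE mxrank1.
have AAr : (A <= Ar)%MS.
  apply/row_subP => i.
  have ri : fingraph.root e i \in roots e by exact: roots_root.
  have -> : row i A = row (enum_rank_in ri (fingraph.root e i)) Ar.
    apply/rowP => j; rewrite !mxE (enum_rankK_in ri) //.
    by rewrite (same_connect se (connect_root e i)).
  exact: row_sub.
have ArA : (Ar <= A)%MS by exact: rowsub_sub.
have -> : \rank A = \rank Ar by apply/eqP; rewrite eqn_leq !mxrankS.
rewrite rAr; apply: eq_card => x; rewrite !inE ?andbT //.
Qed.

Section Graph.
Variables (N : nat) (gamma : 'M[R]_N).
Hypothesis sg : is_signed_graph gamma.

Lemma gsym i j : gamma j i = gamma i j.
Proof. by case: sg => gT _; rewrite -[in RHS]gT mxE. Qed.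

Lemma pos_sym : connect_sym (pos_rel gamma).
Proof. by apply: sym_connect_sym => i j; rewrite /pos_rel gsym. Qed.
Lemma neg_sym : connect_sym (neg_rel gamma).
Proof. by apply: sym_connect_sym => i j; rewrite /neg_rel gsym. Qed.

Lemma const_all (F : nzRingType) (z : 'rV[F]_N) : sg_connected gamma ->
  (forall i j, pos_rel gamma i j -> z 0 i = z 0 j) ->
  (forall i j, neg_rel gamma i j -> z 0 i = z 0 j) ->
  forall i j, z 0 i = z 0 j.
Proof.
move=> con hp hn i j; have /connectP [p pth ->] := con i j.
elim: p i pth => [|x p IH] i //= /andP [eix pth].
rewrite -(IH x pth); move: eix; rewrite /edge_rel neq_lt => /orP [] h.
  exact: hn.
exact: hp.
Qed.

Let g i j := toC (gamma i j).
Let Lc := map_mx toC (signed_laplacian gamma).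

Lemma LcE i j : Lc i j = g i j - (i == j)%:R * \sum_k g i k.
Proof.
rewrite /Lc /g !mxE; case: eqP => [<-|_]; last by rewrite mul0r subr0.
rewrite mul1r [X in _ = _ - X](bigD1 i) //= opprD addrA subrr add0r rmorphN rmorph_sum.
by [].
Qed.

Lemma form_id (z : 'rV[C]_N) :
  2 * cform Lc z = - \sum_i \sum_j g i j * ((z 0 i - z 0 j) * conjC (z 0 i - z 0 j)).
Proof.
pose X := \sum_i \sum_j g i j * (z 0 i * conjC (z 0 i)).
pose Y := \sum_i \sum_j g i j * (z 0 i * conjC (z 0 j)).
have gs i j : g j i = g i j by rewrite /g gsym.
have ha : cform Lc z = Y - X.
  rewrite /cform mxE.
  have -> : \sum_j (z *m Lc) 0 j * (z^t*) j 0 =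
      \sum_i \sum_j (z 0 i * g i j * conjC (z 0 j)
                     - (i == j)%:R * (z 0 i * (\sum_k g i k) * conjC (z 0 j))).
    rewrite exchange_big; apply: eq_bigr => j _; rewrite !mxE mulr_suml.
    apply: eq_bigr => i _; rewrite LcE; ring.
  under eq_bigr => i _ do rewrite sumrB.
  rewrite sumrB /X /Y; congr (_ - _).
    by apply: eq_bigr => i _; apply: eq_bigr => j _; ring.
  apply: eq_bigr => i _; rewrite (bigD1 i) //= eqxx mul1r [X in _ + X]big1 ?addr0.
    by rewrite mulr_sumr mulr_suml; apply: eq_bigr => k _; ring.
  by move=> j /negbTE; rewrite eq_sym => ->; rewrite mul0r.
have e1 i j : g i j * ((z 0 i - z 0 j) * conjC (z 0 i - z 0 j)) =
    g i j * (z 0 i * conjC (z 0 i)) + g j i * (z 0 j * conjC (z 0 j))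
    - (g i j * (z 0 i * conjC (z 0 j)) + g j i * (z 0 j * conjC (z 0 i))).
  by rewrite rmorphB gs; ring.
rewrite (eq_bigr (fun i => \sum_j (g i j * (z 0 i * conjC (z 0 i)) + g j i * (z 0 j * conjC (z 0 j))
    - (g i j * (z 0 i * conjC (z 0 j)) + g j i * (z 0 j * conjC (z 0 i)))))); last first.
  by move=> i _; apply: eq_bigr => j _; rewrite e1.
under eq_bigr => i _ do rewrite sumrB !big_split /=.
rewrite sumrB !big_split /=.
rewrite [\sum_i \sum_j g j i * (z 0 j * conjC (z 0 j))]exchange_big.
rewrite [\sum_i \sum_j g j i * (z 0 j * conjC (z 0 i))]exchange_big.
rewrite -/X -/Y ha; ring.
Qed.

Lemma toC0 (x : R) : x = 0 -> toC x = 0.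
Proof. by move=> ->. Qed.

Lemma sum2_eq0 (F : 'I_N -> 'I_N -> complex R) :
  (forall i j, 0 <= F i j) -> \sum_i \sum_j F i j <= 0 -> forall i j, F i j = 0.
Proof.
move=> h0 hs i j.
have ge i' : 0 <= \sum_j F i' j by apply: sumr_ge0 => k _.
have tot : \sum_i \sum_j F i j == 0.
  by rewrite eq_le hs sumr_ge0 // => k _.
have hi : \sum_j F i j = 0.
  by apply: (psumr_eq0P _ (eqP tot)) => // k _; exact: ge.
by apply: (psumr_eq0P _ hi) => // k _; exact: h0.
Qed.

Let t (z : 'rV[complex R]_N) i j := g i j * ((z 0 i - z 0 j) * conjC (z 0 i - z 0 j)).

Let t_eq0 (z : 'rV[complex R]_N) i j : gamma i j != 0 -> t z i j = 0 -> z 0 i = z 0 j.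
Proof.
move=> nz /eqP; rewrite mulf_eq0 mul_conjC_eq0 subr_eq0 => /orP [h|/eqP //].
exfalso; move: h; rewrite /g -(toC0 (erefl (0:R))) (inj_eq (@complexI _)) => h.
by rewrite h in nz.
Qed.

Lemma neg_const (z : 'rV[complex R]_N) :
  (forall i j, pos_rel gamma i j -> z 0 i = z 0 j) -> cform Lc z <= 0 ->
  forall i j, neg_rel gamma i j -> z 0 i = z 0 j.
Proof.
move=> hp hf.
have tge : forall i j, 0 <= - t z i j.
  move=> i j; rewrite /t; case: (ltrgtP (gamma i j) 0) => h.
  - rewrite -mulNr mulr_ge0 ?mul_conjC_ge0 // oppr_ge0.
    have h' : toC (gamma i j) <= toC 0 by rewrite lecR ltW.
    by rewrite (toC0 (erefl (0:R))) in h'.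
  - by rewrite (hp i j h) subrr mul0r mulr0 oppr0.
  - by rewrite /g (toC0 h) mul0r oppr0.
have hs : \sum_i \sum_j - t z i j <= 0.
  have -> : \sum_i \sum_j - t z i j = 2 * cform Lc z.
    rewrite form_id -sumrN; apply: eq_bigr => i _; by rewrite -sumrN.
  by rewrite mulr_ge0_le0.
move=> i j /[dup] nij; rewrite /neg_rel => h; apply: t_eq0; first by rewrite lt_eqF.
by apply/eqP; rewrite -oppr_eq0; apply/eqP; exact: (sum2_eq0 tge hs i j).
Qed.

Lemma pos_const (z : 'rV[complex R]_N) :
  (forall i j, neg_rel gamma i j -> z 0 i = z 0 j) -> 0 <= cform Lc z ->
  forall i j, pos_rel gamma i j -> z 0 i = z 0 j.
Proof.
move=> hn hf.
have tge : forall i j, 0 <= t z i j.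
  move=> i j; rewrite /t; case: (ltrgtP (gamma i j) 0) => h.
  - by rewrite (hn i j h) subrr mul0r mulr0.
  - rewrite mulr_ge0 ?mul_conjC_ge0 //.
    have h' : toC 0 <= toC (gamma i j) by rewrite lecR ltW.
    by rewrite (toC0 (erefl (0:R))) in h'.
  - by rewrite /g (toC0 h) mul0r.
have hs : \sum_i \sum_j t z i j <= 0.
  have -> : \sum_i \sum_j t z i j = - (2 * cform Lc z) by rewrite form_id opprK.
  by rewrite oppr_le0 mulr_ge0.
move=> i j /[dup] nij; rewrite /pos_rel => h; apply: t_eq0; first by rewrite gt_eqF.
exact: (sum2_eq0 tge hs i j).
Qed.
End Graph.

Lemma const_sub (F : fieldType) N (z : 'rV[F]_N) (i0 : 'I_N) :
  (forall i j, z 0 i = z 0 j) -> (z <= (const_mx 1 : 'rV[F]_N))%MS.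
Proof.
move=> hz; have -> : z = z 0 i0 *: const_mx 1.
  by apply/rowP => j; rewrite !mxE mulr1 (hz j i0).
exact: scalemx_sub.
Qed.

Lemma count3 (s : seq R) :
  (count (fun x : R => (x < 0)%R) s + count (fun x : R => x == 0%R) s + count (fun x : R => (0 < x)%R) s)%N = size s.
Proof.
elim: s => //= x s IH; rewrite -IH.
case: (ltrgtP x 0) => h /=; lia.
Qed.

Lemma mxrow_compE N (e : rel 'I_N) :
  \matrix_(i < N) comp_vec e i = compmx R e.
Proof. by apply/matrixP => i j; rewrite !mxE. Qed.

Lemma part1 N (gamma : 'M[R]_N) :
  (0 < N)%N -> is_signed_graph gamma -> sg_connected gamma ->
  has_inertia (Sfixed_mx gamma) (signed_laplacian gamma)
    (ncomp (neg_rel gamma) - 1) 1 (ncomp (pos_rel gamma) - 1)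
  /\ \rank (Sfixed_mx gamma) = (ncomp (pos_rel gamma) + ncomp (neg_rel gamma) - 1)%N.
Proof.
move=> N0 sg con; pose i0 : 'I_N := Ordinal N0.
set Ap := compmx R (pos_rel gamma); set An := compmx R (neg_rel gamma).
have SE : Sfixed_mx gamma = col_mx Ap An by rewrite /Sfixed_mx !mxrow_compE.
set L := signed_laplacian gamma.
have sL : L^T = L.
  apply/matrixP => i j; rewrite !mxE eq_sym; case: eqP => [->|_] //.
  exact: gsym.
set ones := (const_mx 1 : 'rV[R]_N).
have onesP : (ones <= Ap)%MS by exact: ones_sub (pos_sym sg).
have onesN : (ones <= An)%MS by exact: ones_sub (neg_sym sg).
have ones0 : ones != 0.
  by apply/eqP => /rowP /(_ i0); rewrite !mxE => /eqP; rewrite oner_eq0.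
have rones : \rank ones = 1%N by rewrite rank_rV ones0.
have capS : (Ap :&: An <= ones)%MS.
  apply/row_subP => i; set z := row i _.
  have zp : (z <= Ap)%MS by exact: submx_trans (row_sub i _) (capmxSl _ _).
  have zn : (z <= An)%MS by exact: submx_trans (row_sub i _) (capmxSr _ _).
  apply: (const_sub i0); apply: (const_all con).
    by move=> a b h; apply: (comp_const (pos_sym sg) zp); exact: connect1.
  by move=> a b h; apply: (comp_const (neg_sym sg) zn); exact: connect1.
have rcap : \rank (Ap :&: An)%MS = 1%N.
  apply/eqP; rewrite eqn_leq -{1}rones mxrankS //= -{1}rones mxrankS //.
  by rewrite sub_capmx onesP onesN.
have rS : (\rank (Sfixed_mx gamma) + 1 = \rank Ap + \rank An)%N.
  by rewrite SE -addsmxE -rcap mxrank_sum_cap.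
have rAp : \rank Ap = ncomp (pos_rel gamma) by exact: rank_compmx (pos_sym sg).
have rAn : \rank An = ncomp (neg_rel gamma) by exact: rank_compmx (neg_sym sg).
have [s [hchar [hsize hcount]]] := core_inertia (Sfixed_mx gamma) sL.
have ApS : (Ap <= Sfixed_mx gamma)%MS by rewrite SE -addsmxE addsmxSl.
have AnS : (An <= Sfixed_mx gamma)%MS by rewrite SE -addsmxE addsmxSr.
have onesC : map_mx toC ones = const_mx 1.
  by apply/rowP => j; rewrite !mxE rmorph1.
have rK0 : \rank (map_mx toC ones) = 1%N by rewrite mxrank_map.
have hp : (\rank Ap <= count (fun x : R => (0 < x)%R) s + 1)%N.
  rewrite -rK0 -(mxrank_map toC) (_ : count _ s = count (fun x : R => (0 < 1 * x)%R) s).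
    apply: hcount; first by rewrite map_submx.
    move=> z; rewrite map_compmx => zp hf; rewrite onesC; apply: (const_sub i0).
    have zpc : forall a b, pos_rel gamma a b -> z 0 a = z 0 b.
      by move=> a b h; apply: (comp_const (pos_sym sg) zp); exact: connect1.
    apply: (const_all con) => //.
    apply: (neg_const sg zpc).
    by move: hf; rewrite (_ : toC 1 = 1) ?mul1r.
  by apply: eq_count => x; rewrite mul1r.
have hn : (\rank An <= count (fun x : R => (x < 0)%R) s + 1)%N.
  rewrite -rK0 -(mxrank_map toC) (_ : count _ s = count (fun x : R => (0 < -1 * x)%R) s).
    apply: hcount; first by rewrite map_submx.
    move=> z; rewrite map_compmx => zn hf; rewrite onesC; apply: (const_sub i0).
    have znc : forall a b, neg_rel gamma a b -> z 0 a = z 0 b.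
      by move=> a b h; apply: (comp_const (neg_sym sg) zn); exact: connect1.
    apply: (const_all con) => //.
    apply: (pos_const sg znc).
    move: hf; rewrite (_ : toC (-1) = -1) ?mulN1r ?oppr_le0 //; exact: (rmorphN1 (real_complex R)).
  by apply: eq_count => x; rewrite mulN1r oppr_gt0.
have h0 : (1 <= count (fun x : R => x == 0%R) s)%N.
  rewrite (_ : count _ s = count (pred1 0) s) -?has_count ?has_pred1 //.
  rewrite -root_prod_XsubC -hchar -eigenvalue_root_char.
  apply/eigenvalueP.
  have onesB : (ones <= row_base (Sfixed_mx gamma))%MS.
    by rewrite eq_row_base (submx_trans onesP ApS).
  set v := ones *m pinvmx (row_base (Sfixed_mx gamma)).
  have vB : v *m row_base (Sfixed_mx gamma) = ones by exact: mulmxKpV.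
  have onesL : ones *m L = 0.
    apply/rowP => j; rewrite [LHS]mxE [RHS]mxE.
    have -> : \sum_i ones 0 i * L i j = \sum_i L j i.
      apply: eq_bigr => i _; rewrite [ones 0 i]mxE mul1r.
      by have := congr1 (fun M : 'M[R]_N => M j i) sL; rewrite [LHS]mxE.
    rewrite (bigD1 j) //= mxE eqxx.
    rewrite (eq_bigr (fun i => gamma j i)); last first.
      by move=> i /negbTE hij; rewrite mxE eq_sym hij.
    by rewrite addNr.
  exists v.
    rewrite restr_opE //; move: vB; move: (row_base (Sfixed_mx gamma)) v => B v vB.
    by rewrite !mulmxA vB onesL !mul0mx scale0r.
  by apply: contraNneq ones0 => v0; rewrite -vB v0 mul0mx.
have hc3 := count3 s; rewrite hsize in hc3.
have G1 : count (fun x : R => (x < 0)%R) s = (\rank An - 1)%N by lia.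
have G2 : count (fun x : R => x == 0%R) s = 1%N by lia.
have G3 : count (fun x : R => (0 < x)%R) s = (\rank Ap - 1)%N by lia.
rewrite -rAp -rAn; split; last by lia.
exists s; split; first exact: hchar.
split; first exact: G1.
split; [exact: G2 | exact: G3].
Qed.


End Helpers.
Import Helpers.

Theorem mainTheorem9 (N : nat) (gamma : 'M[R]_N) :
  (0 < N)%N -> is_signed_graph gamma -> sg_connected gamma ->
  has_inertia (Sfixed_mx gamma) (signed_laplacian gamma)
    (ncomp (neg_rel gamma) - 1) 1 (ncomp (pos_rel gamma) - 1)
  /\ fixed_index (Sfixed_mx gamma) gamma
  /\ \rank (Sfixed_mx gamma) = (ncomp (pos_rel gamma) + ncomp (neg_rel gamma) - 1)%N.
Proof.
move=> N0 sg con; have [h1 h2] := part1 N0 sg con.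
split; first exact: h1; split; last exact: h2.
exists (ncomp (neg_rel gamma) - 1)%N, 1%N, (ncomp (pos_rel gamma) - 1)%N.
move=> gamma' sg' ss.
have ep : pos_rel gamma' = pos_rel gamma.
  apply: functional_extensionality => i; apply: functional_extensionality => j.
  by rewrite /pos_rel -sgr_gt0 -ss sgr_gt0.
have en : neg_rel gamma' = neg_rel gamma.
  apply: functional_extensionality => i; apply: functional_extensionality => j.
  by rewrite /neg_rel -sgr_lt0 -ss sgr_lt0.
have ee : edge_rel gamma' = edge_rel gamma.
  apply: functional_extensionality => i; apply: functional_extensionality => j.
  by rewrite /edge_rel -sgr_eq0 -ss sgr_eq0.
have con' : sg_connected gamma' by rewrite /sg_connected ee.
have SE : Sfixed_mx gamma' = Sfixed_mx gamma by rewrite /Sfixed_mx ep en.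
have [h1' _] := part1 N0 sg' con'.
by rewrite -SE -ep -en.
Qed.
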